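(* If $H$ is an abelian subgroup of $\operatorname{Sym}_n$ and $S=S_n(H)$, with $n\geq 3$, then $SzS$ is a prime ideal of $S$.
   Context: $S_n(H)$ is the monoid with presentation $\langle a_1,\dots,a_n \mid a_1\cdots a_n = a_{\sigma(1)}\cdots a_{\sigma(n)},\ \sigma\in H\rangle$, and $z=a_1a_2\cdots a_n$. An ideal $Q$ of a monoid $S$ is prime if $Q\neq S$ and, for $u,v\in S$, $uSv\subseteq Q$ implies $u\in Q$ or $v\in Q$. *)

(* Defs.v *)
From mathcomp Require Import all_boot all_fingroup.
From Stdlib Require Import Relations.
Set Implicit Arguments. Unset Strict Implicit. Unset Printing Implicit Defensive.

(* Words over the alphabet {a_1,...,a_n}, indexed by 'I_n (a_{i+1} <-> i). *)
Definition word (n : nat) := seq 'I_n.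

Definition zword (n : nat) : word n := enum 'I_n.

Definition sword (n : nat) (s : {perm 'I_n}) : word n := map s (zword n).

Inductive pstep (n : nat) (H : {set {perm 'I_n}}) : word n -> word n -> Prop :=
  | PStep (p q : word n) (s : {perm 'I_n}) :
      s \in H -> pstep H (p ++ zword n ++ q) (p ++ sword s ++ q).

(* The congruence on the free monoid generated by the relations
   z = a_{s(1)}...a_{s(n)}, s in H: equal elements of S_n(H). *)
Definition peq (n : nat) (H : {set {perm 'I_n}}) : relation (word n) :=
  clos_refl_sym_trans _ (pstep H).

(* Subsets of S_n(H) represented as predicates on words, closed under peq. *)
Definition respects (n : nat) (H : {set {perm 'I_n}}) (Q : word n -> Prop) :=
  forall u v, peq H u v -> Q u -> Q v.

Definition is_ideal (n : nat) (H : {set {perm 'I_n}}) (Q : word n -> Prop) :=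
  respects H Q /\ forall u s t, Q u -> Q (s ++ u ++ t).

Definition is_prime_ideal (n : nat) (H : {set {perm 'I_n}}) (Q : word n -> Prop) :=
  [/\ is_ideal H Q,
      (exists w, ~ Q w) &
      forall u v, (forall w, Q (u ++ w ++ v)) -> Q u \/ Q v].

Definition SzS (n : nat) (H : {set {perm 'I_n}}) (w : word n) : Prop :=
  exists p q, peq H w (p ++ zword n ++ q).

(* Main.v *)
Require Import Defs.
From mathcomp Require Import all_boot all_fingroup.
From mathcomp Require Import zify.
From Stdlib Require Import Relations.

Section Aux.
Variable n : nat.
Variable H : {group {perm 'I_n}}.

Definition Wd (w : word n) := exists p q s, s \in H /\ w = p ++ sword s ++ q.

Lemma zword_sword : zword n = sword (1 : {perm 'I_n}).
Proof. rewrite /sword -[LHS]map_id; apply: eq_map => x; by rewrite perm1. Qed.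

Lemma step_W x y : pstep H x y -> Wd x /\ Wd y.
Proof.
case=> p q s Hs; split.
  by exists p, q, 1%g; rewrite group1 zword_sword.
by exists p, q, s.
Qed.

Lemma peq_W x y : peq H x y -> (Wd x <-> Wd y).
Proof.
elim=> {x y} [x y /step_W [? ?]|x|x y _ IH|x y z _ IH1 _ IH2]; tauto.
Qed.

Lemma SzS_W w : SzS H w <-> Wd w.
Proof.
split.
  case=> p [q E]; apply: (proj2 (peq_W _ _ E)); by exists p, q, 1%g; rewrite group1 zword_sword.
case=> p [q [s [Hs ->]]]; exists p, q; apply: rst_sym; apply: rst_step.
exact: PStep.
Qed.

Lemma size_sword (s : {perm 'I_n}) : size (sword s) = n.
Proof. by rewrite /sword size_map /zword size_enum_ord. Qed.

Lemma uniq_sword (s : {perm 'I_n}) : uniq (sword s).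
Proof. rewrite /sword map_inj_uniq ?enum_uniq //; exact: perm_inj. Qed.

Lemma perm_sword (s : {perm 'I_n}) : perm_eq (sword s) (zword n).
Proof.
apply: uniq_perm; rewrite ?uniq_sword ?enum_uniq // => x.
rewrite mem_enum /sword; apply/mapP; exists ((s^-1)%g x); first by rewrite mem_enum.
by rewrite permKV.
Qed.

Lemma nth_catR (T : Type) (x0 : T) (s1 s2 : seq T) j :
  size s1 <= j -> nth x0 (s1 ++ s2) j = nth x0 s2 (j - size s1).
Proof. by move=> h; rewrite nth_cat ltnNge h. Qed.

Lemma nth_catL (T : Type) (x0 : T) (s1 s2 : seq T) j :
  j < size s1 -> nth x0 (s1 ++ s2) j = nth x0 s1 j.
Proof. by move=> h; rewrite nth_cat h. Qed.

Lemma nseqS1 (T : Type) k (x : T) : 0 < k -> nseq k x = x :: nseq k.-1 x.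
Proof. by case: k. Qed.
Lemma nseqSr (T : Type) k (x : T) : 0 < k -> nseq k x = nseq k.-1 x ++ [:: x].
Proof. by move=> h; rewrite -{1}(prednK h) -addn1 nseqD. Qed.
Lemma take_cons_pred (T : Type) k (x : T) s : 0 < k -> take k (x :: s) = x :: take k.-1 s.
Proof. by case: k. Qed.

Definition Lbad (u : word n) a :=
  exists s, s \in H /\ sword s = drop (size u + 1 - n) u ++ [:: a].
Definition Rbad (v : word n) a :=
  exists s, s \in H /\ sword s = a :: take n.-1 v.

Lemma Lbad_uniq u a b : Lbad u a -> Lbad u b -> a = b.
Proof.
case=> s [_ Es] [t [_ Et]].
have : perm_eq (sword s) (sword t).
  by rewrite (perm_trans (perm_sword s)) // perm_sym perm_sword.
rewrite Es Et perm_cat2l => /perm_mem/(_ a); rewrite !inE eqxx => /esym/eqP.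
done.
Qed.

Lemma Rbad_uniq v a b : Rbad v a -> Rbad v b -> a = b.
Proof.
case=> s [_ Es] [t [_ Et]].
have : perm_eq (sword s) (sword t).
  by rewrite (perm_trans (perm_sword s)) // perm_sym perm_sword.
rewrite Es Et -(cat1s a) -(cat1s b) perm_cat2r => /perm_mem/(_ a); rewrite !inE eqxx => /esym/eqP.
done.
Qed.

Lemma main u v a : 0 < n -> 1 < n -> Wd (u ++ nseq n a ++ v) ->
  [\/ Wd u, Wd v, Lbad u a | Rbad v a].
Proof.
move=> n0 n1 [p [q [s [Hs E]]]].
have sz := size_sword s.
have szE := congr1 size E; rewrite !size_cat sz size_nseq in szE.
have [c1|c1] := leqP (size p + n) (size u).
  apply: Or41; exists p, (take (size u - size p - n) q), s; split=> //.
  have := congr1 (take (size u)) E.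
  rewrite take_size_cat // take_cat ifF; last by lia.
  rewrite take_cat ifF; last by lia.
  by rewrite sz => <-; rewrite ?subnDA.
have [c2|c2] := leqP (size u + n) (size p).
  apply: Or42; exists (drop (size u + n) p), q, s; split=> //.
  have E' : take (size u + n) p ++ (drop (size u + n) p ++ sword s ++ q)
     = (u ++ nseq n a) ++ v by rewrite catA cat_take_drop -E catA.
  have := congr1 (drop (size u + n)) E'.
  rewrite drop_size_cat; last by rewrite size_takel //; lia.
  rewrite drop_size_cat ?size_cat ?size_nseq // => <-.
have [c3|c3] := eqVneq (size p + n) (size u + 1).
  apply: Or43; exists s; split=> //.
  have Ep : u ++ [:: a] = p ++ sword s.
    have T1 : take (size u + 1) (p ++ sword s ++ q) = p ++ sword s.
      by rewrite catA take_size_cat // size_cat sz.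
    have := congr1 (take (size u + 1)) E.
    rewrite T1 take_cat ifF; last by lia.
    by rewrite addKn (@nseqS1 _ n a n0) /= take0.
  have := congr1 (drop (size p)) Ep.
  rewrite (drop_size_cat (sword s)) // => <-; have hlt : size p < size u by lia. rewrite drop_cat hlt.
  by congr (drop _ _ ++ _); lia.
have [c4|c4] := eqVneq (size p + 1) (size u + n).
  apply: Or44; exists s; split=> //.
  have := congr1 (drop (size p)) E.
  have hlt : (size p < size u) = false by lia.
  have hd : size p - size u = n.-1 by lia.
  rewrite (drop_size_cat (sword s ++ q)) // drop_cat hlt hd.
  rewrite (@nseqSr _ n a n0) -catA (drop_size_cat ([:: a] ++ v)) ?size_nseq //.
  move=> Ev; have := congr1 (take n) Ev.
  rewrite (take_size_cat q) // => <-.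
  by rewrite take_cons_pred.
exfalso.
pose j := maxn (size p) (size u).
have Nj : forall k, j <= k -> k < size p + n -> k < size u + n ->
    nth a (sword s) (k - size p) = a.
  move=> k h1 h2 h3.
  have L : nth a (u ++ nseq n a ++ v) k = a.
    have h4 : size u <= k by lia.
    have h5 : k - size u < size (nseq n a) by rewrite size_nseq; lia.
    by rewrite (@nth_catR _ _ _ _ _ h4) (@nth_catL _ _ _ _ _ h5) nth_nseq if_same.
  have R : nth a (p ++ sword s ++ q) k = nth a (sword s) (k - size p).
    have h4 : size p <= k by lia.
    have h5 : k - size p < size (sword s) by rewrite sz; lia.
    by rewrite (@nth_catR _ _ _ _ _ h4) (@nth_catL _ _ _ _ _ h5).
  by rewrite -R -E.
have e1 := Nj j (leqnn _) ltac:(lia) ltac:(lia).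
have e2 := Nj j.+1 (leqnSn _) ltac:(lia) ltac:(lia).
have hi : j - size p < size (sword s) by rewrite sz; lia.
have hj : j.+1 - size p < size (sword s) by rewrite sz; lia.
have := nth_uniq a hi hj (uniq_sword s).
rewrite e1 e2 eqxx => /esym/eqP; lia.
Qed.

End Aux.

Theorem lemma4p2 (n : nat) (H : {group {perm 'I_n}}) :
  3 <= n -> abelian H -> is_prime_ideal H (SzS H).
Proof.
move=> n3 _; split.
- split.
    move=> x y E [p [q E']]; exists p, q.
    apply: rst_trans E'; exact: rst_sym.
  move=> u s t /(@SzS_W n H _) [p [q [g [Hg ->]]]]; apply/(@SzS_W n H _).
  by exists (s ++ p), (q ++ t), g; split=> //; rewrite !catA.
- exists [::] => /(@SzS_W n H _) [p [q [g [_ E]]]].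
  have := congr1 size E; rewrite !size_cat size_sword /=; lia.
- move=> u v Hw.
  have h0 : 0 < n by lia.
  have h1 : 1 < n by lia.
  have h2 : 2 < n by lia.
  pose a0 := Ordinal h0; pose a1 := Ordinal h1; pose a2 := Ordinal h2.
  have M := fun a => @main n H u v a h0 h1 (proj1 (@SzS_W n H _) (Hw (nseq n a))).
  have n01 : a0 <> a1 by move/(congr1 val).
  have n02 : a0 <> a2 by move/(congr1 val).
  have n12 : a1 <> a2 by move/(congr1 val).
  case: (M a0) => [/(@SzS_W n H _) | /(@SzS_W n H _) | L0 | R0]; [by left|by right| |].
  + case: (M a1) => [/(@SzS_W n H _) | /(@SzS_W n H _) | L1 | R1]; [by left|by right| |].
    * by case: n01; apply: (@Lbad_uniq n H u _ _ L0 L1).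
    * case: (M a2) => [/(@SzS_W n H _) | /(@SzS_W n H _) | L2 | R2]; [by left|by right| |].
      - by case: n02; apply: (@Lbad_uniq n H u _ _ L0 L2).
      - by case: n12; apply: (@Rbad_uniq n H v _ _ R1 R2).
  + case: (M a1) => [/(@SzS_W n H _) | /(@SzS_W n H _) | L1 | R1]; [by left|by right| |].
    * case: (M a2) => [/(@SzS_W n H _) | /(@SzS_W n H _) | L2 | R2]; [by left|by right| |].
      - by case: n12; apply: (@Lbad_uniq n H u _ _ L1 L2).
      - by case: n02; apply: (@Rbad_uniq n H v _ _ R0 R2).
    * by case: n01; apply: (@Rbad_uniq n H v _ _ R0 R1).
Qed.
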